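(* Fix an integer $k\geq1$ and $V=\{0,\ldots,k\}$. Let $\varphi$ be a Boolean function on $V$ with $\#\varphi\neq|\mathrm{eul}(\varphi)|$. Then there exist satisfying valuations $\nu,\nu'$ of $\varphi$ with $(-1)^{|\nu|}\neq(-1)^{|\nu'|}$ and a simple path $\nu=\nu_0-\nu_1-\cdots-\nu_{n+1}=\nu'$ in $\mathbf G_V$ (so $n$ is even) such that $\nu_i\notin\mathrm{sat}(\varphi)$ for all $1\leq i\leq n$.
   Context: A valuation is a subset $\nu\subseteq V$; $\nu^{(l)}$ is $\nu$ with membership of $l$ flipped. A Boolean function on $V$ is a map $\varphi:2^V\to\{\text{false},\text{true}\}$; $\mathrm{sat}(\varphi)$ is its set of satisfying valuations, $\#\varphi=|\mathrm{sat}(\varphi)|$, and $\mathrm{eul}(\varphi)=\sum_{\nu\in\mathrm{sat}(\varphi)}(-1)^{|\nu|}$. $\mathbf G_V$ is the undirected graph with vertex set $2^V$ and edges $\{\nu,\nu^{(l)}\}$ for $\nu\subseteq V$, $l\in V$. *)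

(* Defs.v *)
From mathcomp Require Import all_boot all_order all_algebra.
Set Implicit Arguments. Unset Strict Implicit. Unset Printing Implicit Defensive.
Import GRing.Theory Num.Theory.
Local Open Scope ring_scope.

(* Valuations over a finite variable set V are subsets {set V};
   a Boolean function is a map {set V} -> bool. *)

Definition flipv (V : finType) (nu : {set V}) (l : V) : {set V} :=
  if l \in nu then nu :\ l else l |: nu.

Definition Gedge (V : finType) : rel {set V} :=
  fun nu mu => [exists l : V, mu == flipv nu l].

Definition sat (V : finType) (phi : {set V} -> bool) : {set {set V}} :=
  [set nu | phi nu].

Definition nsat (V : finType) (phi : {set V} -> bool) : nat := #|sat phi|.

Definition eul (V : finType) (phi : {set V} -> bool) : int :=
  \sum_(nu in sat phi) (-1) ^+ #|nu|.

(* Main.v *)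
Require Import Defs.
From mathcomp Require Import all_boot all_order all_algebra.
Import GRing.Theory Num.Theory.
Local Open Scope ring_scope.

Section Aux.
Variables (T : eqType) (e : rel T) (P : pred T) (f : T -> int).

Lemma first_split (p : seq T) : forall (a : T) (q : seq T),
  path e a (q ++ p) -> uniq (a :: q ++ p) -> all (predC P) q -> P a ->
  P (last a (q ++ p)) -> f a != f (last a (q ++ p)) ->
  exists (nu nu' : T) (mid : seq T),
    [/\ P nu /\ P nu', f nu != f nu', path e nu (rcons mid nu'),
        uniq (nu :: rcons mid nu') & all (predC P) mid].
Proof.
elim: p => [|x p IH] a q.
  rewrite cats0 => _ _ hq Pa Pl fl.
  case: q hq Pl fl => [|y q] /=; first by rewrite eqxx.
  move=> /andP[Py hq] Pl _.
  have := mem_last y q; rewrite inE => /orP[/eqP E|hin].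
    by move: Py; rewrite /= -E Pl.
  by move: hq => /allP/(_ _ hin); rewrite /= Pl.
move=> hp hu hq Pa Pl fl.
have [Px|nPx] := boolP (P x).
  have [fx|fx] := eqVneq (f a) (f x).
    have hp' : path e x p.
      by move: hp; rewrite cat_path => /andP[_ /= /andP[]].
    have hu' : uniq (x :: p).
      by move: hu; rewrite -cat_cons cat_uniq => /and3P[_ _ ].
    have hl : last a (q ++ x :: p) = last x p by rewrite last_cat.
    have := IH x [::] hp' hu' isT Px; rewrite /= -hl => /(_ Pl).
    by rewrite -fx => /(_ fl).
  exists a, x, q; split => //.
  - by rewrite rcons_path; move: hp; rewrite cat_path => /andP[-> /=] /andP[].
  - by move: hu; rewrite -cat_cons -cat_rcons cat_uniq => /and3P[].
have := IH a (rcons q x); rewrite cat_rcons => /(_ hp hu).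
by rewrite -cats1 all_cat hq /= nPx => /(_ isT Pa Pl fl).
Qed.
End Aux.

Lemma flipvK (V : finType) (a : {set V}) l : flipv (flipv a l) l = a.
Proof.
rewrite /flipv; case la: (l \in a).
  by rewrite setD11 setD1K.
by rewrite setU11 setU1K // la.
Qed.

Lemma Gedge_sym (V : finType) : symmetric (@Gedge V).
Proof.
suff H : forall a b : {set V}, Gedge a b -> Gedge b a.
  by move=> a b; apply/idP/idP; apply: H.
move=> a b; rewrite /Gedge => /fintype.existsP[l /eqP ->]; apply/fintype.existsP; exists l.
by rewrite flipvK.
Qed.

Lemma con0 (V : finType) n : forall a : {set V}, #|a| = n -> connect (@Gedge V) a set0.
Proof.
elim: n => [|n IH] a ha.
  by move/eqP: ha; rewrite cards_eq0 => /eqP ->; apply: connect0.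
have [l la] : exists l, l \in a by apply/card_gt0P; rewrite ha.
apply: (connect_trans (y := a :\ l)).
  apply: connect1; apply/fintype.existsP; exists l; by rewrite /flipv la.
apply: IH; move: ha; rewrite (cardsD1 l) la; by case.
Qed.

Lemma conn (V : finType) (a b : {set V}) : connect (@Gedge V) a b.
Proof.
apply: (connect_trans (y := set0)); first exact: con0.
rewrite (sym_connect_sym (@Gedge_sym V)); exact: con0.
Qed.

Theorem lemma5p11 (k : nat) (hk : (1 <= k)%N) (phi : {set 'I_k.+1} -> bool) :
  (nsat phi)%:Z != `|eul phi| ->
  exists (nu nu' : {set 'I_k.+1}) (mid : seq {set 'I_k.+1}),
    [/\ nu \in sat phi /\ nu' \in sat phi,
        ((-1) ^+ #|nu| != (-1) ^+ #|nu'| :> int),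
        path (@Gedge _) nu (rcons mid nu'),
        uniq (nu :: rcons mid nu') &
        all (fun x => x \notin sat phi) mid].
Proof.
move=> hne.
have [a [b [Pa Pb fab]]] : exists a b, [/\ a \in sat phi, b \in sat phi &
    ((-1) ^+ #|a| != (-1) ^+ #|b| :> int)].
  case: (boolP [exists a, exists b, [&& a \in sat phi, b \in sat phi & ((-1) ^+ #|a| != (-1) ^+ #|b| :> int)]]).
    by move=> /fintype.existsP[a /fintype.existsP[b /and3P[h1 h2 h3]]]; exists a, b.
  move=> hall; exfalso; move/negP: hne; apply.
  have hall' : forall a b, a \in sat phi -> b \in sat phi -> ((-1) ^+ #|a| = (-1) ^+ #|b| :> int).
    move=> a b ha hb; apply/eqP; apply: contraNT hall => H.
    by apply/fintype.existsP; exists a; apply/fintype.existsP; exists b; rewrite ha hb H.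
  rewrite /nsat /eul; case: (pickP (mem (sat phi))) => [a0 Pa0|h0].
    rewrite (eq_bigr (fun _ => (-1) ^+ #|a0|)); last by move=> i hi; apply: hall'.
    rewrite sumr_const normrMn normrX normrN1 expr1n.
    by rewrite natz.
  rewrite big1; last by move=> i; move: (h0 i); rewrite /= => ->.
  by rewrite (eq_card0 h0).
move: (@conn _ a b) => /connectP[p hp hl].
move: hl; case: (shortenP hp) => p' hp' hu _ hl'.
have := @first_split _ (@Gedge _) (mem (sat phi)) (fun nu => (-1) ^+ #|nu|) p' a [::] hp' hu isT Pa.
rewrite /= -hl' => /(_ Pb fab) [nu [nu' [mid [h1 h2 h3 h4 h5]]]].
by exists nu, nu', mid.
Qed.
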